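(* Let $K\ge 2$, let $\mathcal{D}$ be a probability distribution on $\mathcal{X}\times\mathcal{Y}$ with $\mathcal{Y}=\{1,\dots,K\}$, and let $\rho$ be a probability distribution over classifiers $h:\mathcal{X}\to\mathcal{Y}$. Let $W_\rho(X,Y)=\mathbb{E}_{h\sim\rho}[\mathbb{1}(h(X)\neq Y)]$ for $(X,Y)\sim\mathcal{D}$. Suppose $\rho$ is competent, i.e. for every $0\le t\le 1/2$, $$\mathbb{P}_{\mathcal{D}}\big(W_\rho\in[t,1/2)\big)\;\ge\;\mathbb{P}_{\mathcal{D}}\big(W_\rho\in[1/2,1-t]\big),$$ and suppose $\mathbb{E}_{h\sim\rho}[L(h)]\neq 0$. Then $$\mathrm{DER}\;\ge\;\mathrm{EIR}\;\ge\;\frac{2(K-1)}{K}\,\mathrm{DER}-\frac{3K-4}{K}.$$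
   Context: The error rate of a classifier is $L(h)=\mathbb{E}_{(X,Y)\sim\mathcal{D}}[\mathbb{1}(h(X)\neq Y)]$. The majority vote classifier is $h_{\mathrm{MV}}(x)=\arg\max_j \mathbb{E}_{h\sim\rho}[\mathbb{1}(h(x)=j)]$ (ties broken arbitrarily). The disagreement rate of two classifiers is $D(h,h')=\mathbb{E}_{X\sim\mathcal{D}}[\mathbb{1}(h(X)\neq h'(X))]$, and the expected disagreement is $\mathbb{E}_{h,h'\sim\rho}[D(h,h')]$ with $h,h'$ drawn independently from $\rho$. The ensemble improvement rate is $\mathrm{EIR}=\big(\mathbb{E}_{h\sim\rho}[L(h)]-L(h_{\mathrm{MV}})\big)/\mathbb{E}_{h\sim\rho}[L(h)]$ and the disagreement-error ratio is $\mathrm{DER}=\mathbb{E}_{h,h'\sim\rho}[D(h,h')]/\mathbb{E}_{h\sim\rho}[L(h)]$. *)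

(* Defs.v *)
From HB Require Import structures.
From mathcomp Require Import all_boot all_order all_algebra.
From mathcomp Require Import all_classical all_reals all_analysis.
Set Implicit Arguments. Unset Strict Implicit. Unset Printing Implicit Defensive.
Import Order.TTheory GRing.Theory Num.Theory.
Local Open Scope ring_scope.
Local Open Scope classical_set_scope.

(* Setting.
   - labels Y = 'I_K (K classes; 'I_K = {0,..,K-1} stands for {1,..,K});
   - the data (X,Y) ~ D is modelled as a pair of random variables
       Xv : Z -> Xs, Yv : Z -> 'I_K on a probability space (Z, D);
   - classifiers are parameterised: rho is a probability on a measurable
     space Theta and the classifier drawn is  h theta : Xs -> 'I_K. *)
Section ensemble.
Variables (R : realType) (K : nat).
Variables (d1 d2 d3 : measure_display).
Variables (Theta : measurableType d1) (Xs : measurableType d2)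
          (Z : measurableType d3).
Variables (rho : probability Theta R) (D : probability Z R).
Variables (h : Theta -> Xs -> 'I_K) (Xv : Z -> Xs) (Yv : Z -> 'I_K).

Definition Wrho (z : Z) : R :=
  fine (\int[rho]_th ((h th (Xv z) != Yv z)%:R)%:E)%E.

Definition risk (th : Theta) : R :=
  fine (\int[D]_z ((h th (Xv z) != Yv z)%:R)%:E)%E.

Definition gibbs_risk : R := fine (\int[rho]_th (risk th)%:E)%E.

Definition vote (x : Xs) (j : 'I_K) : R :=
  fine (\int[rho]_th ((h th x == j)%:R)%:E)%E.

Definition is_majority_vote (hMV : Xs -> 'I_K) : Prop :=
  forall x j, vote x j <= vote x (hMV x).

Definition risk_fun (g : Xs -> 'I_K) : R :=
  fine (\int[D]_z ((g (Xv z) != Yv z)%:R)%:E)%E.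

Definition disagreement (th th' : Theta) : R :=
  fine (\int[D]_z ((h th (Xv z) != h th' (Xv z))%:R)%:E)%E.

Definition expected_disagreement : R :=
  fine (\int[rho]_th \int[rho]_th' (disagreement th th')%:E)%E.

Definition EIR (hMV : Xs -> 'I_K) : R :=
  (gibbs_risk - risk_fun hMV) / gibbs_risk.

Definition DER : R := expected_disagreement / gibbs_risk.

Definition competent : Prop :=
  forall t : R, 0 <= t -> t <= 1 / 2 ->
    (D [set z | (1 / 2 <= Wrho z <= 1 - t)%R] <=
     D [set z | (t <= Wrho z < 1 / 2)%R])%E.

End ensemble.

(* Main.v *)
Require Import Defs.
From HB Require Import structures.
From mathcomp Require Import all_boot all_order all_algebra.
From mathcomp Require Import all_classical all_reals all_analysis.
From mathcomp Require Import measurable_realfun ring lra.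
Import Order.TTheory GRing.Theory Num.Theory.
Local Open Scope ring_scope.
Local Open Scope classical_set_scope.

Section gen.
Context {d} {T : measurableType d} {R : realType} (P : probability T R).

Lemma bint (f : T -> R) (M : R) : measurable_fun setT f ->
  (forall x, `|f x| <= M) -> P.-integrable setT (EFin \o f).
Proof.
move=> mf fM; apply: measurable_bounded_integrable => //.
  by apply: (le_lt_trans (probability_le1 P measurableT)); rewrite ltry.
exists M; split; first by rewrite num_real.
move=> y My x _; apply: le_trans (fM x) _; exact: ltW.
Qed.

Lemma RP_cst (c : R) : Rintegral P setT (fun _ => c) = c.
Proof.
rewrite Rintegral_cst //; rewrite -[RHS]mulr1; congr (_ * _).
by rewrite -[1]/(fine (1%E : \bar R)); congr fine; exact: probability_setT. Qed.

Lemma RP_indic (A : set T) : measurable A ->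
  Rintegral P setT (\1_A) = fine (P A).
Proof. by move=> mA; rewrite /Rintegral integral_indic // setIT. Qed.

Lemma RP_sum (I : Type) (s : seq I) (f : I -> T -> R) :
  (forall i, P.-integrable setT (EFin \o f i)) ->
  Rintegral P setT (fun x => \sum_(i <- s) f i x) =
  \sum_(i <- s) Rintegral P setT (f i).
Proof.
move=> fi; elim: s => [|a s IH].
  by rewrite big_nil; under eq_Rintegral do rewrite big_nil; exact: RP_cst.
rewrite big_cons -IH -RintegralD //; last first.
  apply: (eq_integrable measurableT) (@integrable_sum _ _ _ P setT measurableT I s xpredT
     (fun i x => (f i x)%:E) (fun i _ => fi i)) => x _.
  by rewrite /= sumEFin.
by apply: eq_Rintegral => x _; rewrite big_cons.
Qed.

Lemma RP_fin (A : set T) : measurable A -> P A \is a fin_num.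
Proof. by move=> mA; apply: fin_num_measure. Qed.

End gen.

Section gen2.
Context {d} {T : measurableType d} {R : realType} (P : probability T R).
Lemma RP01 (f : T -> R) : measurable_fun setT f -> (forall x, 0 <= f x <= 1) ->
  0 <= Rintegral P setT f <= 1.
Proof.
move=> mf f01; apply/andP; split.
  by apply: Rintegral_ge0 => x _; have /andP[] := f01 x.
rewrite -[X in _ <= X](RP_cst P); apply: le_Rintegral => //.
- apply: (@bint _ _ _ P _ 1) => // x; have /andP[a b] := f01 x.
  by rewrite ger0_norm.
- exact: finite_measure_integrable_cst.
- by move=> x _; have /andP[] := f01 x.
Qed.
End gen2.

Section gen3.
Context {d} {T : measurableType d} {R : realType} (P : probability T R).
Lemma bintZ (c : R) (f : T -> R) : measurable_fun setT f -> (forall x, 0 <= f x <= 1) ->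
  P.-integrable setT (EFin \o (fun x => c * f x)).
Proof.
move=> mf f01; apply: (@bint _ _ _ P _ `|c|).
  by apply: measurable_funM.
move=> x; have /andP[a b] := f01 x; rewrite normrM (ger0_norm a).
by rewrite -[X in _ <= X]mulr1; apply: ler_wpM2l.
Qed.

Lemma bint01 (f : T -> R) : measurable_fun setT f -> (forall x, 0 <= f x <= 1) ->
  P.-integrable setT (EFin \o f).
Proof.
move=> mf f01; apply: (@bint _ _ _ P _ 1) => // x.
by have /andP[a b] := f01 x; rewrite ger0_norm.
Qed.
End gen3.


Section fub.
Context {d1 d2} {T1 : measurableType d1} {T2 : measurableType d2} {R : realType}.
Context (P1 : probability T1 R) (P2 : probability T2 R).
Context (f : T1 * T2 -> R) (mf : measurable_fun setT f)
  (f0 : forall p, 0 <= f p) (f1 : forall p, f p <= 1).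

Notation ef := (EFin \o f).
Let mef : measurable_fun setT (EFin \o f).
Proof. exact/measurable_EFinP. Qed.
Let ef0 : forall p, (0 <= ef p)%E.
Proof. by move=> p; rewrite lee_fin. Qed.
Let fabs p : `|f p| <= 1.
Proof. by rewrite ger0_norm. Qed.

Lemma fub_meas1 : measurable_fun setT (fun x => Rintegral P2 setT (fun y => f (x, y))).
Proof.
apply: (measurableT_comp (f := fine) (g := fubini_F P2 ef)) => //.
exact: measurable_fun_fubini_tonelli_F.
Qed.

Lemma fub_meas2 : measurable_fun setT (fun y => Rintegral P1 setT (fun x => f (x, y))).
Proof.
apply: (measurableT_comp (f := fine) (g := fubini_G P1 ef)) => //.
exact: measurable_fun_fubini_tonelli_G.
Qed.

Lemma fub_eq : Rintegral P1 setT (fun x => Rintegral P2 setT (fun y => f (x, y))) =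
               Rintegral P2 setT (fun y => Rintegral P1 setT (fun x => f (x, y))).
Proof.
rewrite /Rintegral; congr fine.
transitivity (\int[P1]_x \int[P2]_y ef (x, y))%E.
  apply: eq_integral => x _; rewrite fineK //.
  apply: integrable_fin_num => //; apply: (@bint _ _ _ P2 _ 1) => //.
  exact: (measurable_fun_pair2 _ mf).
rewrite fubini_tonelli //.
apply: eq_integral => y _; rewrite fineK //.
apply: integrable_fin_num => //; apply: (@bint _ _ _ P1 _ 1) => //.
exact: (measurable_fun_pair1 _ mf).
Qed.
End fub.


Section step.
Context {R : realFieldType} {t : nat -> R}.
Hypothesis t0 : t 0%N = 0.
Hypothesis tm : forall k, t k <= t k.+1.

Definition phi (x : R) : R := 2 * x ^+ 2.

Lemma phi_mono a b : 0 <= a -> a <= b -> phi a <= phi b.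
Proof. by rewrite /phi => ha hab; nra. Qed.

Lemma t_ge0 k : 0 <= t k.
Proof. by elim: k => [|k IH]; [rewrite t0|exact: le_trans (tm k)]. Qed.

Definition Sst m (w : R) := \sum_(k < m) (phi (t k.+1) - phi (t k)) * ((t k.+1 <= w)%R : bool)%:R.

Lemma Sst_up m w : 0 <= w ->
  Sst m w <= (if t m <= w then phi (t m) else phi w).
Proof.
move=> w0; elim: m => [|m IH].
  by rewrite /Sst big_ord0 t0 w0 /phi; nra.
rewrite /Sst big_ord_recr /= -/(Sst m w).
have := t_ge0 m; have := tm m.
case: (leP (t m.+1) w) => h1; case: (leP (t m) w) => h2 /= in IH *.
- rewrite mulr1; lra.
- lra.
- rewrite mulr0 addr0 => a b; have := @phi_mono (t m) w b h2; lra.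
- by rewrite mulr0 addr0.
Qed.

Lemma Sst_up' m w : 0 <= w -> Sst m w <= phi w.
Proof.
move=> w0; apply: (le_trans (@Sst_up m w w0)); case: ifP => // h.
exact: @phi_mono (t m) w (t_ge0 m) h.
Qed.

Lemma Sst_lo m w dl : 0 <= w -> 0 <= dl ->
  (forall k, (k < m)%N -> phi (t k.+1) - phi (t k) <= dl) ->
  (if t m <= w then phi (t m) else phi w - dl) <= Sst m w.
Proof.
move=> w0 d0; elim: m => [|m IH] hd.
  by rewrite /Sst big_ord0 t0 w0 /phi; nra.
rewrite /Sst big_ord_recr /= -/(Sst m w).
have {}IH := IH (fun k hk => hd k (ltnW hk)).
have hdm := hd m (ltnSn m).
have := t_ge0 m; have := tm m.
case: (leP (t m.+1) w) => h1; case: (leP (t m) w) => h2 /= in IH *.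
- rewrite mulr1; lra.
- lra.
- rewrite mulr0 addr0 => a b; have := @phi_mono w (t m.+1) w0 (ltW h1); lra.
- by rewrite mulr0 addr0.
Qed.
End step.
Arguments phi {R}.
Arguments Sst {R}.


Lemma indic_bool {d} {T : measurableType d} {R : realType} (b : T -> bool) z :
  (\1_[set z | b z] z : R) = (b z)%:R.
Proof.
rewrite indicE; case: (boolP (b z)) => h; first by rewrite mem_set.
by rewrite memNset //; exact/negP.
Qed.

Lemma pointwise (R : realFieldType) (N : nat) (w u : R) : (0 < N)%N ->
  0 <= w -> w <= 1 -> u = (2 * N%:R)^-1 ->
  \sum_(k < N) (phi (k.+1%:R * u) - phi (k%:R * u)) *
     (((k.+1%:R * u <= w < 1 / 2)%R : bool)%:R - ((1 / 2 <= w <= 1 - k.+1%:R * u)%R : bool)%:R)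
   - N%:R^-1 <= 2 * w ^+ 2 - ((1 / 2 <= w)%R : bool)%:R.
Proof.
move=> N0 w0 w1 hu.
set t := fun k : nat => k%:R * u.
have Npos : 0 < N%:R :> R by rewrite ltr0n.
have u0 : 0 < u by rewrite hu invr_gt0 mulr_gt0.
have uN : u * (2 * N%:R) = 1 by rewrite hu mulVf // gt_eqF // mulr_gt0.
have N0' : N%:R != 0 :> R by rewrite gt_eqF.
have Ninv : N%:R^-1 = 2 * u by rewrite hu; field.
have t0 : t 0%N = 0 by rewrite /t mul0r.
have tm : forall k, t k <= t k.+1.
  by move=> k; rewrite /t; apply: ler_wpM2r; [exact: ltW | rewrite ler_nat].
have tN : t N = 1 / 2 by rewrite /t hu; field.
have hd : forall k, (k < N)%N -> phi (t k.+1) - phi (t k) <= N%:R^-1.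
  move=> k kN; rewrite Ninv /phi /t.
  have : k.+1%:R <= N%:R :> R by rewrite ler_nat.
  rewrite -natr1 => kN'.
  have k0 : 0 <= k%:R :> R by [].
  nra.
have [wl|wh] := ltP w (1 / 2).
  rewrite (eq_bigr (fun k : 'I_N => (phi (t k.+1) - phi (t k)) *
                      ((t k.+1 <= w)%R : bool)%:R)); last first.
    by move=> k _; rewrite andbT /= subr0.
  rewrite -/(Sst t N w).
  have := Sst_up' t0 tm N w w0; rewrite /phi.
  have : 0 <= N%:R^-1 :> R by rewrite invr_ge0 ltW.
  rewrite /=; lra.
rewrite (eq_bigr (fun k : 'I_N => - ((phi (t k.+1) - phi (t k)) *
                    ((t k.+1 <= 1 - w)%R : bool)%:R))); last first.
  move=> k _; rewrite andbF /= sub0r mulrN.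
  by rewrite (_ : (w <= 1 - k.+1%:R * u) = (t k.+1 <= 1 - w)) // lerBrDr addrC -lerBrDr.
rewrite sumrN -/(Sst t N (1 - w)) /=.
have w'0 : 0 <= 1 - w by lra.
have w'1 : 1 - w <= t N by rewrite tN; lra.
have Nv0 : 0 <= N%:R^-1 :> R by rewrite invr_ge0 ltW.
have := Sst_lo t0 tm N (1 - w) _ w'0 Nv0 hd.
rewrite (_ : (t N <= 1 - w) = (1 - w == t N)); last first.
  by rewrite eq_le w'1.
case: eqP => [e|_].
  rewrite tN in e; have -> : w = 1 / 2 by lra.
  rewrite tN /phi !expr2; lra.
rewrite /phi => h; have := sqr_ge0 (2 * w - 1); nra.
Qed.

Lemma indic01 {d} {T : measurableType d} {R : realType} (A : set T) z :
  0 <= (\1_A z : R) <= 1.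
Proof. by rewrite indicE; case: (z \in A) => /=; rewrite ?lexx ?ler01. Qed.

Lemma comp_int d (Z : measurableType d) (R : realType) (D : probability Z R)
    (W : Z -> R) :
  measurable_fun setT W -> (forall z, 0 <= W z <= 1) ->
  (forall t : R, 0 <= t -> t <= 1 / 2 ->
    (D [set z | (1 / 2 <= W z <= 1 - t)%R] <= D [set z | (t <= W z < 1 / 2)%R])%E) ->
  Rintegral D setT (fun z => ((1 / 2 <= W z)%R : bool)%:R) <=
  Rintegral D setT (fun z => 2 * W z ^+ 2).
Proof.
move=> mW W01 comp.
have mpre : forall i : interval R, measurable (W @^-1` [set` i]).
  by move=> i; rewrite -[_ @^-1` _]setTI; exact: mW measurableT _ (measurable_itv i).
have mA : forall a : R, measurable [set z | (a <= W z < 1 / 2)%R].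
  move=> a; rewrite (_ : [set z | _] = W @^-1` `[a, 1 / 2[); first exact: mpre.
  by apply/seteqP; split => z /=; rewrite in_itv.
have mB : forall a : R, measurable [set z | (1 / 2 <= W z <= 1 - a)%R].
  move=> a; rewrite (_ : [set z | _] = W @^-1` `[1 / 2, 1 - a]); first exact: mpre.
  by apply/seteqP; split => z /=; rewrite in_itv.
have mH : measurable [set z | (1 / 2 <= W z)%R].
  rewrite (_ : [set z | _] = W @^-1` `[1 / 2, +oo[); first exact: mpre.
  by apply/seteqP; split => z /=; rewrite in_itv /= andbT.
have Wb : forall z, `|W z| <= 1.
  by move=> z; have /andP[a b] := W01 z; rewrite ger0_norm.
have iH : D.-integrable setT (EFin \o (fun z => ((1 / 2 <= W z)%R : bool)%:R)).
  apply: (@bint _ _ _ D _ 1).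
    rewrite (_ : (fun z => _) = \1_[set z | (1 / 2 <= W z)%R]).
      exact: measurable_indic.
    by apply/funext => z; rewrite indic_bool.
  by move=> z; case: (1 / 2 <= W z)%R; rewrite ?normr0 ?normr1 ?ler01.
have iW : D.-integrable setT (EFin \o (fun z => 2 * W z ^+ 2)).
  apply: (@bint _ _ _ D _ 2).
    by apply: measurable_funM => //; apply: measurable_funM.
  move=> z; rewrite normrM normrX ger0_norm //.
  have := Wb z; have := normr_ge0 (W z); nra.
apply/ler_addgt0Pr => e e0.
set N := (Num.truncn e^-1).+1.
have Ne : e^-1 < N%:R by exact: truncnS_gt.
have N0 : (0 < N)%N by [].
have Npos : 0 < N%:R :> R by rewrite ltr0n.
have Nie : N%:R^-1 <= e.
  rewrite -(invrK e) lef_pV2 ?ltW // ?posrE ?invr_gt0 //.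
pose u : R := (2 * N%:R)^-1.
pose c (k : nat) := phi (k.+1%:R * u) - phi (k%:R * u).
pose F z := \sum_(k < N) c k * (\1_[set z | (k.+1%:R * u <= W z < 1 / 2)%R] z -
                                \1_[set z | (1 / 2 <= W z <= 1 - k.+1%:R * u)%R] z).
have iterm : forall k : 'I_N, D.-integrable setT (EFin \o (fun z =>
     c k * (\1_[set z | (k.+1%:R * u <= W z < 1 / 2)%R] z -
            \1_[set z | (1 / 2 <= W z <= 1 - k.+1%:R * u)%R] z))).
  move=> k; apply: (@bint _ _ _ D _ `|c k|).
    apply: measurable_funM => //; apply: measurable_funB; exact: measurable_indic.
  move=> z; rewrite normrM ler_piMr //.
  have := @indic01 _ _ R [set z | (k.+1%:R * u <= W z < 1 / 2)%R] z.
  have := @indic01 _ _ R [set z | (1 / 2 <= W z <= 1 - k.+1%:R * u)%R] z.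
  move=> /andP[a1 a2] /andP[b1 b2]; rewrite ler_norml; apply/andP; split; lra.
have iF : D.-integrable setT (EFin \o F).
  apply: (eq_integrable measurableT) (@integrable_sum _ _ _ D setT measurableT 'I_N
     (index_enum 'I_N) xpredT _ (fun i _ => iterm i)) => x _.
  by rewrite /= sumEFin.
have F0 : 0 <= Rintegral D setT F.
  rewrite /F RP_sum //; apply: sumr_ge0 => k _.
  have iI : forall A : set Z, measurable A -> D.-integrable setT (EFin \o \1_A).
    move=> A mA0; apply: (@bint _ _ _ D _ 1); first exact: measurable_indic.
    move=> z; have /andP[i1 i2] := @indic01 _ _ R A z; by rewrite ger0_norm.
  have ku : k.+1%:R * u <= 1 / 2.
    have h : k.+1%:R <= N%:R :> R by rewrite ler_nat.
    have u0 : 0 <= u by rewrite invr_ge0 mulr_ge0 // ltW.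
    have uN : u * (2 * N%:R) = 1 by rewrite /u mulVf // mulf_neq0 // gt_eqF.
    have : 0 <= N%:R - k.+1%:R :> R by rewrite subr_ge0.
    move=> /mulr_ge0 /(_ u0); nra.
  have ku0 : 0 <= k.+1%:R * u by rewrite mulr_ge0 // invr_ge0 mulr_ge0 // ltW.
  rewrite RintegralZl //; last first.
    by apply: (eq_integrable measurableT) (integrableB measurableT (iI _ (mA _)) (iI _ (mB _))).
  apply: mulr_ge0.
    rewrite /c subr_ge0; apply: phi_mono; first by rewrite mulr_ge0 // invr_ge0 mulr_ge0 // ltW.
    by apply: ler_wpM2r; [rewrite invr_ge0 mulr_ge0 // ltW | rewrite ler_nat].
  rewrite RintegralB //; [|exact: iI|exact: iI].
  rewrite !RP_indic // subr_ge0; apply: fine_le; [exact: RP_fin|exact: RP_fin|].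
  exact: comp.
have hF : Rintegral D setT F - N%:R^-1 <=
    Rintegral D setT (fun z => 2 * W z ^+ 2) - Rintegral D setT (fun z => ((1 / 2 <= W z)%R : bool)%:R).
  rewrite -(RP_cst D N%:R^-1) -RintegralB // -RintegralB //; last first.
    exact: finite_measure_integrable_cst.
  apply: le_Rintegral => //.
  - apply: (eq_integrable measurableT) (integrableB measurableT iF
      (finite_measure_integrable_cst _ _ measurableT)) => z _ //.
  - apply: (eq_integrable measurableT) (integrableB measurableT iW iH) => z _ //.
  move=> z _; rewrite /F.
  under eq_bigr do rewrite !indic_bool.
  have /andP[a b] := W01 z.
  exact: pointwise.
lra.
Qed.


Section good.
Context {K : nat} {d} {U : measurableType d}.

Definition good (c : U -> 'I_K) := forall j, measurable (c @^-1` [set j]).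

Lemma good_cst j0 : good (fun _ => j0).
Proof.
move=> j; have [->|ne] := eqVneq j0 j.
  by rewrite (_ : _ @^-1` _ = setT) //; apply/seteqP; split.
rewrite (_ : _ @^-1` _ = set0) //; apply/seteqP; split => // u /= e.
by move: ne; rewrite e eqxx.
Qed.

Lemma eqset_meas (c1 c2 : U -> 'I_K) : good c1 -> good c2 ->
  measurable [set u | c1 u = c2 u].
Proof.
move=> g1 g2.
rewrite (_ : [set u | _] = \bigcup_(j in setT) (c1 @^-1` [set j] `&` c2 @^-1` [set j])).
  apply: fin_bigcup_measurable; first exact: finite_finset.
  by move=> j _; apply: measurableI.
apply/seteqP; split => [u e|u [j _ [/= a b]]].
  by exists (c1 u) => //; split => //=.
by rewrite a b.
Qed.

Lemma neq_meas (R : realType) (c1 c2 : U -> 'I_K) : good c1 -> good c2 ->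
  measurable_fun setT (fun u => (c1 u != c2 u)%:R : R).
Proof.
move=> g1 g2.
rewrite (_ : (fun u => _) = \1_[set u | c1 u != c2 u]); last first.
  by apply/funext => u; rewrite indic_bool.
apply: measurable_indic.
rewrite (_ : [set u | _] = ~` [set u | c1 u = c2 u]).
  exact/measurableC/eqset_meas.
by apply/seteqP; split => u /=; [move=> /eqP|move=> /eqP].
Qed.

Lemma eq_meas (R : realType) (c1 c2 : U -> 'I_K) : good c1 -> good c2 ->
  measurable_fun setT (fun u => (c1 u == c2 u)%:R : R).
Proof.
move=> g1 g2.
rewrite (_ : (fun u => _) = \1_[set u | c1 u == c2 u]); last first.
  by apply/funext => u; rewrite indic_bool.
apply: measurable_indic.
rewrite (_ : [set u | _] = [set u | c1 u = c2 u]); first exact: eqset_meas.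
by apply/seteqP; split => u /= /eqP.
Qed.

End good.


Section alg.
Context (R : realFieldType) (K : nat) (p : 'I_K -> R).
Hypothesis p0 : forall j, 0 <= p j.
Hypothesis ps : \sum_j p j = 1.

Lemma p_le1 j : p j <= 1.
Proof.
rewrite -ps (bigD1 j) //= lerDl; exact: sumr_ge0.
Qed.

Lemma sumsq_le m : (forall j, p j <= p m) -> \sum_j p j ^+ 2 <= p m.
Proof.
move=> pm; apply: (@le_trans _ _ (\sum_j p j * p m)).
  apply: ler_sum => j _; rewrite expr2; apply: ler_wpM2l => //.
by rewrite -mulr_suml ps mul1r.
Qed.

Lemma alg_a y m : (forall j, p j <= p m) ->
  (1 - p y) - (m != y)%:R <= 1 - \sum_j p j ^+ 2.
Proof.
move=> pm; have h1 := sumsq_le m pm; have h2 := p_le1 m.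
have [E|NE] := eqVneq m y.
  by rewrite E in h1 *; rewrite /=; lra.
rewrite /=; have := p0 y; lra.
Qed.

Lemma alg_c y m : (forall j, p j <= p m) -> m != y -> 1 / 2 <= 1 - p y.
Proof.
move=> pm my.
have : p m + p y <= 1.
  rewrite -ps (bigD1 m) //= lerD2l (bigD1 y) 1?eq_sym //= lerDl.
  by apply: sumr_ge0 => j _; exact: p0.
have := pm y; lra.
Qed.

Lemma alg_b y : (1 < K)%N ->
  (K%:R - 1) * (1 - \sum_j p j ^+ 2) <=
  2 * (K%:R - 1) * (1 - p y) - K%:R * (1 - p y) ^+ 2.
Proof.
move=> K1.
set W := 1 - p y.
have hW : \sum_(j | j != y) p j = W.
  by have := ps; rewrite (bigD1 y) //= => e; rewrite /W; lra.
set S2 := \sum_(j | j != y) p j ^+ 2.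
have hS : \sum_j p j ^+ 2 = p y ^+ 2 + S2 by rewrite (bigD1 y).
have hc : \sum_(j | j != y) W ^+ 2 = (K%:R - 1) * W ^+ 2.
  rewrite sumr_const cardC1 card_ord.
  by case: (K) K1 => // K0 _; rewrite /= mulrSr addrK mulr_natl.
have key : 0 <= (K%:R - 1) * ((K%:R - 1) * S2 - W ^+ 2).
  have -> : (K%:R - 1) * ((K%:R - 1) * S2 - W ^+ 2) =
      \sum_(j | j != y) ((K%:R - 1) * p j - W) ^+ 2.
    rewrite (eq_bigr (fun j => ((K%:R - 1) ^+ 2 * p j ^+ 2 - (2 * (K%:R - 1) * W) * p j) + W ^+ 2)); last by move=> j _; ring.
    rewrite big_split sumrB /= hc -!mulr_sumr hW -/S2; ring.
  by apply: sumr_ge0 => j _; exact: sqr_ge0.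
have kpos : 0 < K%:R - 1 :> R.
  by rewrite subr_gt0 (ltr_nat R 1 K).
have key2 : W ^+ 2 <= (K%:R - 1) * S2.
  by rewrite -subr_ge0; rewrite pmulr_rge0 // in key.
rewrite hS.
have -> : p y = 1 - W by rewrite /W opprB addrC subrK.
set k := K%:R : R.
nra.
Qed.
End alg.


Lemma sum_ind (R : realType) K (a : 'I_K) : \sum_j ((a == j)%:R : R) = 1.
Proof.
rewrite (bigD1 a) //= eqxx big1 ?addr0 // => j /negbTE.
by rewrite eq_sym => ->.
Qed.

Lemma sum_sel (R : realType) K (a : 'I_K) (f : 'I_K -> R) :
  \sum_j f j * (a == j)%:R = f a.
Proof.
rewrite (bigD1 a) //= eqxx mulr1 big1 ?addr0 // => j /negbTE.
by rewrite eq_sym => ->; rewrite mulr0.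
Qed.

Lemma absB01 (R : realType) (a b : R) : 0 <= a <= 1 -> 0 <= b <= 1 -> `|a - b| <= 1.
Proof. move=> /andP[a0 a1] /andP[b0 b1]; rewrite ler_norml; apply/andP; split; lra. Qed.

Lemma absB2 (R : realType) (c1 c2 a b : R) : 0 <= a <= 1 -> 0 <= b <= 1 ->
  `|c1 * a - c2 * b| <= `|c1| + `|c2|.
Proof.
move=> /andP[a0 a1] /andP[b0 b1]; rewrite (le_trans (ler_normB _ _)) //.
rewrite !normrM (ger0_norm a0) (ger0_norm b0) lerD //.
  by rewrite -[X in _ <= X]mulr1; apply: ler_wpM2l.
by rewrite -[X in _ <= X]mulr1; apply: ler_wpM2l.
Qed.

Section main.
Context (R : realType) (K : nat) (d1 d2 d3 : measure_display)
    (Theta : measurableType d1) (Xs : measurableType d2) (Z : measurableType d3)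
    (rho : probability Theta R) (D : probability Z R)
    (h : Theta -> Xs -> 'I_K) (Xv : Z -> Xs) (Yv : Z -> 'I_K)
    (hMV : Xs -> 'I_K).
Hypothesis K2 : (2 <= K)%N.
Hypothesis hm : forall j : 'I_K, measurable [set p : Theta * Xs | h p.1 p.2 = j].
Hypothesis mXv : measurable_fun setT Xv.
Hypothesis mYv : forall j : 'I_K, measurable (Yv @^-1` [set j]).
Hypothesis mhMV : forall j : 'I_K, measurable (hMV @^-1` [set j]).

Lemma good_h d (U : measurableType d) (g : U -> Theta * Xs) :
  measurable_fun setT g -> good (fun u => h (g u).1 (g u).2).
Proof.
move=> mg j; have := mg measurableT _ (hm j); rewrite setTI.
by congr measurable.
Qed.

Lemma good_Y d (U : measurableType d) (g : U -> Z) :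
  measurable_fun setT g -> good (fun u => Yv (g u)).
Proof.
move=> mg j; have := mg measurableT _ (mYv j); rewrite setTI.
by congr measurable.
Qed.

Lemma good_MV : good (fun z => hMV (Xv z)).
Proof.
move=> j; have := mXv measurableT _ (mhMV j); rewrite setTI.
by congr measurable.
Qed.

Let g1 : measurable_fun setT (fun p : Theta * Z => (p.1, Xv p.2)).
Proof.
apply: measurable_fun_pair => //; exact: measurableT_comp.
Qed.

Let gx (x : Xs) : measurable_fun setT (fun th : Theta => (th, x)).
Proof. exact: measurable_fun_pair. Qed.

Notation vote := (vote rho h).

Lemma vote_meas_th x j : measurable_fun setT (fun th => ((h th x == j)%:R : R)).
Proof.
apply: (@eq_meas _ _ _ R (fun th => h th x) (fun _ => j)).
  exact: good_h (gx x).
exact: good_cst.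
Qed.

Lemma vote01 x j : 0 <= vote x j <= 1.
Proof.
apply/andP; split.
  by apply: Rintegral_ge0 => th _; rewrite ler0n.
rewrite -[X in _ <= X](RP_cst rho); apply: le_Rintegral => //.
- apply: (@bint _ _ _ rho _ 1); first exact: vote_meas_th.
  by move=> th; case: (_ == _); rewrite ?normr0 ?normr1 ?ler01.
- exact: finite_measure_integrable_cst.
- by move=> th _; case: (_ == _); rewrite ?ler01 ?lexx.
Qed.

Lemma vote_sum x : \sum_j vote x j = 1.
Proof.
rewrite /Defs.vote -RP_sum.
  under eq_Rintegral do rewrite sum_ind.
  exact: RP_cst.
move=> j; apply: (@bint _ _ _ rho _ 1); first exact: vote_meas_th.
by move=> th; case: (_ == _); rewrite ?normr0 ?normr1 ?ler01.
Qed.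


Lemma ind01 (b : bool) : `|(b%:R : R)| <= 1.
Proof. by case: b; rewrite ?normr0 ?normr1 ?ler01. Qed.

Lemma ne_int x a : Rintegral rho setT (fun th => (h th x != a)%:R) = 1 - vote x a.
Proof.
transitivity (Rintegral rho setT (fun th => 1 - ((h th x == a)%:R : R))).
  by apply: eq_Rintegral => th _; case: (_ == _); rewrite /= ?subr0 ?subrr.
rewrite RintegralB //; first by rewrite RP_cst.
  exact: finite_measure_integrable_cst.
apply: (@bint _ _ _ rho _ 1); first exact: vote_meas_th.
by move=> th; apply: ind01.
Qed.

Lemma ne_int' x a : Rintegral rho setT (fun th => (a != h th x)%:R) = 1 - vote x a.
Proof. by under eq_Rintegral do rewrite eq_sym; exact: ne_int. Qed.

Let fE := fun p : Theta * Z => ((h p.1 (Xv p.2) != Yv p.2)%:R : R).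

Let mfE : measurable_fun setT fE.
Proof.
apply: (@neq_meas _ _ _ R (fun p : Theta * Z => h (p.1, Xv p.2).1 (p.1, Xv p.2).2)
   (fun p => Yv p.2)).
  exact: good_h g1.
exact: good_Y measurable_snd.
Qed.

Let fE0 p : 0 <= fE p. Proof. by rewrite /fE ler0n. Qed.
Let fE1 p : fE p <= 1. Proof. by rewrite /fE; case: (_ != _); rewrite ?ler01 ?lexx. Qed.

Lemma W_meas : measurable_fun setT (Wrho rho h Xv Yv).
Proof. exact: (fub_meas2 rho fE mfE fE0). Qed.

Lemma W_eq z : Wrho rho h Xv Yv z = 1 - vote (Xv z) (Yv z).
Proof. exact: ne_int. Qed.

Lemma gibbs_eq : gibbs_risk rho D h Xv Yv = Rintegral D setT (Wrho rho h Xv Yv).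
Proof. exact: (fub_eq rho D fE mfE fE0 fE1). Qed.


Lemma vote_meas_z j : measurable_fun setT (fun z => vote (Xv z) j).
Proof.
have mf : measurable_fun setT (fun p : Theta * Z => ((h p.1 (Xv p.2) == j)%:R : R)).
  apply: (@eq_meas _ _ _ R (fun p : Theta * Z => h (p.1, Xv p.2).1 (p.1, Xv p.2).2)
     (fun _ => j)); [exact: good_h g1|exact: good_cst].
exact: (fub_meas2 rho _ mf (fun p => ler0n _ _)).
Qed.

Let gth (th : Theta) : measurable_fun setT (fun p : Theta * Z => (th, Xv p.2)).
Proof.
apply: measurable_fun_pair => //; exact: measurableT_comp.
Qed.

Let fD th := fun p : Theta * Z => ((h th (Xv p.2) != h p.1 (Xv p.2))%:R : R).

Let mfD th : measurable_fun setT (fD th).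
Proof.
apply: (@neq_meas _ _ _ R (fun p : Theta * Z => h (th, Xv p.2).1 (th, Xv p.2).2)
   (fun p : Theta * Z => h (p.1, Xv p.2).1 (p.1, Xv p.2).2)).
  exact: good_h (gth th).
exact: good_h g1.
Qed.

Let fD0 th p : 0 <= fD th p. Proof. by rewrite /fD ler0n. Qed.
Let fD1 th p : fD th p <= 1.
Proof. by rewrite /fD; case: (_ != _); rewrite ?ler01 ?lexx. Qed.

Lemma dis_inner th : Rintegral rho setT (fun th' => disagreement D h Xv th th') =
  Rintegral D setT (fun z => 1 - vote (Xv z) (h th (Xv z))).
Proof.
apply: eq_trans (fub_eq rho D (fD th) (mfD th) (fD0 th) (fD1 th)) _.
apply: eq_Rintegral => z _; rewrite /fD /=; exact: ne_int'.
Qed.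

Lemma vote_h x : Rintegral rho setT (fun th => 1 - vote x (h th x)) =
  1 - \sum_j vote x j ^+ 2.
Proof.
transitivity (Rintegral rho setT (fun th => 1 - \sum_j vote x j * (h th x == j)%:R)).
  by apply: eq_Rintegral => th _; rewrite sum_sel.
have mt : forall j, measurable_fun setT (fun th => vote x j * (h th x == j)%:R).
  by move=> j; apply: measurable_funM => //; exact: vote_meas_th.
have it : forall j, rho.-integrable setT (EFin \o (fun th => vote x j * (h th x == j)%:R)).
  move=> j; apply: (@bint _ _ _ rho _ 1) => // th.
  rewrite normrM; have := vote01 x j; have := ind01 (h th x == j).
  have := normr_ge0 ((h th x == j)%:R : R).
  move=> a b /andP[c e]; rewrite ger0_norm //; nra.
rewrite RintegralB //; last 2 first.
- exact: finite_measure_integrable_cst.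
- apply: (@bint _ _ _ rho _ 1); first exact: measurable_sum.
  move=> th; rewrite sum_sel; have /andP[a b] := vote01 x (h th x).
  by rewrite ger0_norm.
rewrite RP_cst RP_sum //; congr (_ - _); apply: eq_bigr => j _.
rewrite RintegralZl //.
apply: (@bint _ _ _ rho _ 1); first exact: vote_meas_th.
by move=> th; apply: ind01.
Qed.

Let fV := fun p : Theta * Z => 1 - vote (Xv p.2) (h p.1 (Xv p.2)).

Let mfV : measurable_fun setT fV.
Proof.
rewrite (_ : fV = fun p => 1 - \sum_j vote (Xv p.2) j * (h p.1 (Xv p.2) == j)%:R);
  last by apply/funext => p; rewrite /fV sum_sel.
apply: measurable_funB => //; apply: measurable_sum => j; apply: measurable_funM.
  exact: (measurableT_comp (vote_meas_z j) measurable_snd).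
apply: (@eq_meas _ _ _ R (fun p : Theta * Z => h (p.1, Xv p.2).1 (p.1, Xv p.2).2)
   (fun _ => j)); [exact: good_h g1|exact: good_cst].
Qed.

Let fV0 p : 0 <= fV p.
Proof. by rewrite /fV subr_ge0; have /andP[] := vote01 (Xv p.2) (h p.1 (Xv p.2)). Qed.
Let fV1 p : fV p <= 1.
Proof. by rewrite /fV lerBlDr lerDl; have /andP[] := vote01 (Xv p.2) (h p.1 (Xv p.2)). Qed.

Lemma dis_eq : expected_disagreement rho D h Xv =
  Rintegral D setT (fun z => 1 - \sum_j vote (Xv z) j ^+ 2).
Proof.
have step1 : expected_disagreement rho D h Xv = Rintegral rho setT
    (fun th => Rintegral rho setT (fun th' => disagreement D h Xv th th')).
  rewrite /expected_disagreement /Rintegral; congr fine; apply: eq_integral => th _.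
  rewrite fineK //; apply: integrable_fin_num => //.
  apply: bint01; first exact: (fub_meas1 D (fD th) (mfD th) (fD0 th)).
  move=> th'; apply: RP01; first exact: (measurable_fun_pair2 th' (mfD th)).
  by move=> z; case: (_ != _); rewrite ?ler01 ?lexx.
rewrite step1; under eq_Rintegral do rewrite dis_inner.
apply: eq_trans (fub_eq rho D fV mfV fV0 fV1) _.
by apply: eq_Rintegral => z _; rewrite /fV /=; exact: vote_h.
Qed.

Hypothesis hmaj : is_majority_vote rho h hMV.
Hypothesis hcomp : competent rho D h Xv Yv.
Hypothesis hG : gibbs_risk rho D h Xv Yv != 0.

Lemma main_thm :
  DER rho D h Xv Yv >= EIR rho D h Xv Yv hMV /\
  EIR rho D h Xv Yv hMV >=
    (2 * (K%:R - 1)) / K%:R * DER rho D h Xv Yv - (3 * K%:R - 4) / K%:R.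
Proof.
set W := Wrho rho h Xv Yv.
have mW : measurable_fun setT W := W_meas.
have W01 z : 0 <= W z <= 1.
  rewrite /W W_eq; have /andP[a b] := vote01 (Xv z) (Yv z).
  by apply/andP; split; lra.
set wr := fun z => ((hMV (Xv z) != Yv z)%:R : R).
have mwr : measurable_fun setT wr.
  exact: (@neq_meas _ _ _ R (fun z => hMV (Xv z)) (fun z => Yv (id z)) good_MV
            (@good_Y _ _ id (@measurable_id _ _ setT))).
have wr01 z : 0 <= wr z <= 1.
  by rewrite /wr; case: (_ != _); rewrite ?ler01 ?lexx.
set Dp := fun z => 1 - \sum_j vote (Xv z) j ^+ 2.
have mDp : measurable_fun setT Dp.
  apply: measurable_funB => //; apply: measurable_sum => j.
  exact: measurable_funX (vote_meas_z j).
have p0 z j : 0 <= vote (Xv z) j by have /andP[] := vote01 (Xv z) j.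
have Dp01 z : 0 <= Dp z <= 1.
  have h1 := @sumsq_le R K (vote (Xv z)) (p0 z) (vote_sum (Xv z)) (hMV (Xv z)) (hmaj (Xv z)).
  have h2 := vote01 (Xv z) (hMV (Xv z)).
  have h3 : 0 <= \sum_j vote (Xv z) j ^+ 2.
    by apply: sumr_ge0 => j _; exact: sqr_ge0.
  move/andP: h2 => [h2 h2']; rewrite /Dp; apply/andP; split; lra.
have W2_01 z : 0 <= W z ^+ 2 <= 1.
  have /andP[a b] := W01 z; apply/andP; split; first exact: sqr_ge0.
  by rewrite expr2; nra.
set g := Rintegral D setT W.
set m := Rintegral D setT wr.
set dd := Rintegral D setT Dp.
set q := Rintegral D setT (fun z => W z ^+ 2).
have HG : gibbs_risk rho D h Xv Yv = g := gibbs_eq.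
have HM : risk_fun D Xv Yv hMV = m by [].
have HD : expected_disagreement rho D h Xv = dd := dis_eq.
have mW2 : measurable_fun setT (fun z => W z ^+ 2) := measurable_funX 2 mW.
have g0 : 0 <= g by apply: Rintegral_ge0 => z _; have /andP[] := W01 z.
have gpos : 0 < g by rewrite lt_def g0 andbT -HG.
set k := K%:R : R.
have kpos : 0 < k - 1 by rewrite subr_gt0 /k (ltr_nat R 1 K).
have I1 : g - m <= dd.
  rewrite -RintegralB //; [|exact: bint01|exact: bint01].
  apply: le_Rintegral => //.
  - apply: (@bint _ _ _ D _ 1); first exact: measurable_funB.
    move=> z; exact: absB01 (W01 z) (wr01 z).
  - exact: bint01.
  move=> z _.
  have := (@alg_a R K (vote (Xv z)) (p0 z) (vote_sum (Xv z)) (Yv z) (hMV (Xv z)) (hmaj (Xv z))).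
  by rewrite -(W_eq z).
have I2 : (k - 1) * dd <= 2 * (k - 1) * g - k * q.
  rewrite -!RintegralZl //; [|exact: bint01|exact: bint01|exact: bint01].
  rewrite -RintegralB //; [|exact: bintZ|exact: bintZ].
  apply: le_Rintegral => //; [exact: bintZ| |].
  - apply: (@bint _ _ _ D _ (`|2 * (k - 1)| + `|k|)).
      apply: measurable_funB; apply: measurable_funM => //.
    move=> z; exact: absB2 (W01 z) (W2_01 z).
  move=> z _.
  have := (@alg_b R K (vote (Xv z)) (vote_sum (Xv z)) (Yv z) K2).
  by rewrite -(W_eq z).
have I3 : m <= 2 * q.
  apply: (@le_trans _ _ (Rintegral D setT (fun z => ((1 / 2 <= W z)%R : bool)%:R))).
    apply: le_Rintegral => //; [exact: bint01| |].
    - apply: bint01.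
        rewrite (_ : (fun z => _) = \1_[set z | (1 / 2 <= W z)%R]).
          apply: measurable_indic.
          rewrite (_ : [set z | _] = W @^-1` `[1 / 2, +oo[).
            by rewrite -[_ @^-1` _]setTI; exact: mW measurableT _ (measurable_itv _).
          by apply/seteqP; split => z /=; rewrite in_itv /= andbT.
        by apply/funext => z; rewrite indic_bool.
      by move=> z; case: (1 / 2 <= W z)%R; rewrite ?ler01 ?lexx.
    move=> z _; rewrite /wr; have [e|ne] := eqVneq (hMV (Xv z)) (Yv z).
      by rewrite /=; case: (1 / 2 <= W z)%R; rewrite ?ler01 ?lexx.
    rewrite /= (_ : (1 / 2 <= W z)%R = true) //.
    have := (@alg_c R K (vote (Xv z)) (p0 z) (vote_sum (Xv z)) (Yv z) (hMV (Xv z)) (hmaj (Xv z)) ne).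
    by rewrite -(W_eq z) => ->.
  rewrite -RintegralZl //; last exact: bint01.
  apply: comp_int; [exact: mW|exact: W01|exact: hcomp].
rewrite /DER /EIR HG HM HD; split.
  by apply: ler_wpM2r; [rewrite invr_ge0 | exact: I1].
have k0 : 0 < k by lra.
have key : 2 * (k - 1) * dd - (3 * k - 4) * g <= k * (g - m).
  have := ler_wpM2l (ltW k0) I3; nra.
rewrite (_ : _ - _ = ((2 * (k - 1) * dd - (3 * k - 4) * g) / k) / g); last first.
  by rewrite /k; field; rewrite ?gt_eqF // -/k.
apply: ler_wpM2r; first by rewrite invr_ge0.
by rewrite ler_pdivrMr //; nra.
Qed.

End main.


Theorem theorem2 (R : realType) (K : nat) (d1 d2 d3 : measure_display)
    (Theta : measurableType d1) (Xs : measurableType d2) (Z : measurableType d3)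
    (rho : probability Theta R) (D : probability Z R)
    (h : Theta -> Xs -> 'I_K) (Xv : Z -> Xs) (Yv : Z -> 'I_K)
    (hMV : Xs -> 'I_K) :
  (2 <= K)%N ->
  (* measurability (well-definedness) assumptions *)
  (forall j : 'I_K, measurable [set p : Theta * Xs | h p.1 p.2 = j]) ->
  measurable_fun setT Xv ->
  (forall j : 'I_K, measurable (Yv @^-1` [set j])) ->
  (forall j : 'I_K, measurable (hMV @^-1` [set j])) ->
  is_majority_vote rho h hMV ->
  competent rho D h Xv Yv ->
  gibbs_risk rho D h Xv Yv != 0 ->
  DER rho D h Xv Yv >= EIR rho D h Xv Yv hMV /\
  EIR rho D h Xv Yv hMV >=
    (2 * (K%:R - 1)) / K%:R * DER rho D h Xv Yv - (3 * K%:R - 4) / K%:R.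
Proof.
move=> K2 hm mXv mYv mhMV hmaj hcomp hG.
exact: (@main_thm R K d1 d2 d3 Theta Xs Z rho D h Xv Yv hMV K2 hm mXv mYv mhMV hmaj hcomp hG).
Qed.
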